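(* Let $0\le \ell<n$ be integers, let $d$ be a divisor of $n$ and let $y\in\mathbb{Z}_{n,d}$. Then the number of $x\in\mathbb{Z}_n^*$ such that $xb\equiv y\pmod n$ for some integer $b$ with $0\le b\le \ell$ equals $$\frac{\varphi\!\left(\frac{n}{d},\left\lfloor \frac{\ell}{d}\right\rfloor\right)}{\varphi\!\left(\frac nd\right)}\,\varphi(n).$$
   Context: $\mathbb{Z}_m=\{0,1,\dots,m-1\}$ denotes the integers modulo $m$; $\mathbb{Z}_{m,d}=\{x\in\mathbb{Z}_m:\gcd(x,m)=d\}$ and $\mathbb{Z}_m^*=\mathbb{Z}_{m,1}$. $\varphi(m)=|\mathbb{Z}_m^*|$ is Euler's totient function, and the relative totient function is $\varphi(m,k)=|\{x\in\mathbb{Z}_m^*: x\le k\}|$. *)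

(* Defs.v *)
From mathcomp Require Import all_boot all_order all_algebra.
Set Implicit Arguments. Unset Strict Implicit. Unset Printing Implicit Defensive.

Definition Zmd (m d : nat) : seq nat := [seq x <- iota 0 m | gcdn x m == d].

Definition Zstar (m : nat) : seq nat := Zmd m 1.

Definition rel_totient (m k : nat) : nat := count (fun x => x <= k) (Zstar m).

(* Main.v *)
Require Import Defs.
From mathcomp Require Import all_boot all_order all_algebra.
From mathcomp Require Import all_fingroup all_solvable.
From mathcomp Require Import zify ring.
Set Implicit Arguments. Unset Strict Implicit.

Lemma mem_Zstar n x : (x \in Zstar n) = (x < n) && coprime x n.
Proof. by rewrite /Zstar /Zmd mem_filter mem_iota andbC. Qed.

Lemma uniq_Zstar n : uniq (Zstar n).
Proof. by rewrite filter_uniq // iota_uniq. Qed.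

Lemma size_Zstar n : size (Zstar n) = totient n.
Proof.
rewrite totient_count_coprime size_filter -sum1_count big_mkcond /=.
rewrite /index_iota subn0; apply: eq_bigr => i _.
by rewrite /coprime gcdnC; case: (_ == 1).
Qed.

Lemma mod_cancel c k x z : coprime c k -> c * x = c * z %[mod k] -> x = z %[mod k].
Proof.
move=> ck Hxz; case: k ck Hxz => [|k] ck Hxz.
  by move: ck; rewrite /coprime gcdn0 => /eqP c1; rewrite c1 !mul1n in Hxz.
have E := Euler_exp_totient ck.
have tp : 0 < totient k.+1 by rewrite totient_gt0.
have H1 : forall t, t = c ^ (totient k.+1).-1 * (c * t) %[mod k.+1].
  by move=> t; rewrite mulnA -expnSr prednK // -modnMml E modnMml mul1n.
by rewrite (H1 x) (H1 z) -modnMmr Hxz modnMmr.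
Qed.

Lemma lift_unit m n u : 0 < n -> m %| n -> coprime u m ->
  exists w, coprime w n /\ w = u %[mod m].
Proof.
move=> n0 mn um.
pose k := \prod_(p <- primes n | ~~ (p %| u)) p.
exists (u + m * k); split; last by rewrite addnC mulnC modnMDl.
have g0 : 0 < gcdn (u + m * k) n by rewrite gcdn_gt0 n0 orbT.
rewrite /coprime; case: (leqP (gcdn (u + m * k) n) 1) => [g1|g1].
  by apply/eqP; apply/anti_leq; rewrite g1.
have [p pp pg] := pdivP g1.
have pw : p %| u + m * k := dvdn_trans pg (dvdn_gcdl _ _).
have pn : p %| n := dvdn_trans pg (dvdn_gcdr _ _).
have pin : p \in primes n by rewrite mem_primes pp n0 pn.
have Ek : (p %| k) = ~~ (p %| u).
  rewrite Euclid_dvd_prod // big_has_cond; apply/hasP/idP.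
    case=> q qin /andP[qu pq]; move: pq; rewrite dvdn_prime2 //; last first.
      by move: qin; rewrite mem_primes => /andP[].
    by move/eqP ->.
  by move=> pu; exists p => //; rewrite /= pu dvdnn.
case pu: (p %| u).
  have pm : ~~ (p %| m).
    by rewrite -prime_coprime //; apply: coprime_dvdl pu um.
  move: pw; rewrite dvdn_addr // Euclid_dvdM // Ek pu orbF.
  by rewrite (negbTE pm).
by move: pw; rewrite dvdn_addl ?pu // dvdn_mull // Ek pu.
Qed.

Lemma fiber m n a c : 0 < n -> m %| n -> coprime a m -> coprime c m ->
  count (fun x => x * a == c %[mod m]) (Zstar n)
  = count (fun x => x == 1 %[mod m]) (Zstar n).
Proof.
move=> n0 mn am cm.
have m0 : 0 < m := dvdn_gt0 n0 mn.
pose i := a ^ (totient m).-1.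
have ai : a * i = 1 %[mod m].
  by rewrite /i -expnS prednK ?totient_gt0 // Euler_exp_totient.
have cim : coprime (c * i) m by rewrite coprimeMl cm coprimeXl.
have [w [wn wci]] := lift_unit n0 mn cim.
pose f x := (w * x) %% n.
have fperm : perm_eq (map f (Zstar n)) (Zstar n).
  have inj : {in Zstar n &, injective f}.
    move=> x z; rewrite !mem_Zstar => /andP[xn _] /andP[zn _] /eqP.
    rewrite /f => H; have := mod_cancel wn (eqP H).
    by rewrite !modn_small.
  have sub : {subset map f (Zstar n) <= Zstar n}.
    move=> t /mapP[x]; rewrite mem_Zstar => /andP[_ xn] ->.
    by rewrite mem_Zstar ltn_pmod // coprime_modl coprimeMl wn.
  have U : uniq (map f (Zstar n)) by rewrite map_inj_in_uniq // uniq_Zstar.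
  have [_ E] := uniq_min_size U sub (eq_leq (esym (size_map f (Zstar n)))).
  exact: uniq_perm U (uniq_Zstar n) E.
rewrite -(seq.permP fperm) count_map; apply: eq_in_count => x xs /=.
rewrite /f.
have -> : (w * x %% n * a) = (c * x) %[mod m].
  rewrite -modnMml (modn_dvdm _ mn) modnMml.
  rewrite -mulnA -modnMml wci modnMml.
  have -> : c * i * (x * a) = c * x * (a * i) by nia.
  by rewrite -modnMmr ai modnMmr muln1.
apply/eqP/eqP => H.
  by apply: (mod_cancel cm); rewrite muln1.
by rewrite -modnMmr H modnMmr muln1.
Qed.

Lemma has_count (T : eqType) (B : seq T) (R : pred T) :
  uniq B -> (forall b1 b2, b1 \in B -> b2 \in B -> R b1 -> R b2 -> b1 = b2) ->
  (has R B : nat) = count R B.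
Proof.
elim: B => //= b B IH /andP[bB uB] H.
have sb : forall z, z \in B -> z \in b :: B by move=> z zB; rewrite inE zB orbT.
case Rb: (R b) => /=.
  have hB : has R B = false.
    apply/negbTE/hasPn => z zB; apply/negP => Rz.
    have bz := H b z (mem_head _ _) (sb _ zB) Rb Rz.
    by move: bB; rewrite bz zB.
  rewrite -IH ?hB // => b1 b2 h1 h2; apply: H; exact: sb.
rewrite add0n IH // => b1 b2 h1 h2; apply: H; exact: sb.
Qed.

Lemma count_has_sum (S T : eqType) (s : seq S) (B : seq T) (R : S -> T -> bool) :
  uniq B -> (forall x b1 b2, x \in s -> b1 \in B -> b2 \in B -> R x b1 -> R x b2 -> b1 = b2) ->
  count (fun x => has (R x) B) s = \sum_(b <- B) count (R^~ b) s.
Proof.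
move=> uB; elim: s => [|x s IH] H /=; first by rewrite big1.
rewrite big_split /= -IH; last by move=> z b1 b2 zs; apply: H; rewrite inE zs orbT.
congr (_ + _).
rewrite has_count //; last by move=> b1 b2; apply: H (mem_head _ _).
by rewrite -sum1_count big_mkcond.
Qed.

Lemma sum_const_seq (T : Type) (B : seq T) k : \sum_(b <- B) k = size B * k.
Proof. by elim: B => [|b B IH]; rewrite ?big_nil ?big_cons ?IH. Qed.

Lemma gcd_div a b d : 0 < d -> gcdn (a * d) (b * d) = d -> coprime a b.
Proof.
move=> d0 h; move: h; rewrite -muln_gcdl -{2}(mul1n d) => /eqP.
by rewrite eqn_mul2r eqn0Ngt d0.
Qed.

Lemma main_nat (n l d y : nat) :
  (l < n)%N -> (d %| n)%N -> y \in Zmd n d ->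
  (0 < n %/ d) /\
  count (fun x => has (fun b => x * b == y %[mod n]) (iota 0 l.+1)) (Zstar n)
   = rel_totient (n %/ d) (l %/ d) * count (fun x => x == 1 %[mod n %/ d]) (Zstar n) /\
  totient n = totient (n %/ d) * count (fun x => x == 1 %[mod n %/ d]) (Zstar n).
Proof.
move=> ln dn; rewrite /Zmd mem_filter mem_iota add0n => /andP[/eqP gy yn].
set m := n %/ d.
have n0 : 0 < n by case: n ln {yn dn gy m}.
have d0 : 0 < d := dvdn_gt0 n0 dn.
have nE : n = m * d by rewrite /m divnK.
have m0 : 0 < m by move: n0; rewrite nE muln_gt0 => /andP[].
have mn : m %| n by rewrite nE dvdn_mulr.
have dy : d %| y by rewrite -gy dvdn_gcdl.
pose y' := y %/ d.
have yE : y = y' * d by rewrite /y' divnK.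
have cy : coprime y' m.
  by apply: (gcd_div d0); rewrite -yE -nE.
pose F1 := count (fun x => x == 1 %[mod m]) (Zstar n).
split => //; split.
- pose B := filter (fun b => b <= l %/ d) (Zstar m).
  have key : forall x, x \in Zstar n ->
     has (fun b => x * b == y %[mod n]) (iota 0 l.+1)
     = has (fun b => x * b == y' %[mod m]) B.
    move=> x; rewrite mem_Zstar => /andP[xn cx].
    apply/hasP/hasP.
    + case=> b; rewrite mem_iota add0n ltnS => /andP[_ bl] /eqP H.
      have gb : gcdn b n = d.
        rewrite -gy -(gcdn_modl y) -H gcdn_modl [gcdn (x * b) n]gcdnC gcdnC.
        by rewrite Gauss_gcdr // coprime_sym.
      have db : d %| b by rewrite -gb dvdn_gcdl.
      pose b' := b %/ d.
      have bE : b = b' * d by rewrite /b' divnK.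
      exists b'.
        rewrite /B mem_filter mem_Zstar leq_div2r //=.
        apply/andP; split.
          by rewrite -(ltn_pmul2r d0) -bE -nE (leq_ltn_trans bl).
        by apply: (gcd_div d0); rewrite -bE -nE.
      move: H; rewrite bE yE nE mulnA -!muln_modl => /eqP.
      by rewrite eqn_mul2r eqn0Ngt d0.
    + case=> b'; rewrite /B mem_filter mem_Zstar => /andP[bl /andP[bm _]] /eqP H.
      exists (b' * d).
        rewrite mem_iota add0n ltnS.
        by apply: leq_trans (leq_divM l d); rewrite leq_mul2r bl orbT.
      by rewrite yE nE mulnA -!muln_modl H.
  rewrite (eq_in_count key) count_has_sum.
  + rewrite big_seq (eq_bigr (fun _ => F1)); last first.
      move=> b; rewrite /B mem_filter mem_Zstar => /andP[_ /andP[_ cb]].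
      exact: fiber.
    by rewrite -big_seq sum_const_seq /B size_filter.
  + by rewrite filter_uniq ?uniq_Zstar.
  + move=> x b1 b2; rewrite mem_Zstar => /andP[_ cx].
    move=> hb1 hb2 /eqP h1 /eqP h2.
    move: hb1 hb2; rewrite /B !mem_filter !mem_iota !add0n.
    move=> /andP[_ /andP[_ /andP[_ b1m]]] /andP[_ /andP[_ /andP[_ b2m]]].
    have cxm : coprime x m := coprime_dvdr mn cx.
    have := mod_cancel cxm (etrans h1 (esym h2)).
    by rewrite !modn_small.
- rewrite -size_Zstar -count_predT.
  have -> : count predT (Zstar n)
      = count (fun x => has (fun u => x == u %[mod m]) (Zstar m)) (Zstar n).
    apply: eq_in_count => x; rewrite mem_Zstar => /andP[xn cx] /=.
    symmetry; apply/hasP; exists (x %% m); last by rewrite modn_mod.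
    by rewrite mem_Zstar ltn_pmod // coprime_modl; exact: coprime_dvdr mn cx.
  rewrite count_has_sum; last first.
  - move=> x u1 u2 _; rewrite !mem_Zstar => /andP[u1m _] /andP[u2m _] /eqP h1 /eqP h2.
    by move: (etrans (esym h1) h2); rewrite !modn_small.
  - exact: uniq_Zstar.
  rewrite big_seq (eq_bigr (fun _ => F1)); last first.
    move=> u; rewrite mem_Zstar => /andP[_ cu].
    rewrite /F1 -(@fiber m n 1 u n0 mn (coprime1n m) cu).
    by apply: eq_count => x; rewrite muln1.
  by rewrite -big_seq sum_const_seq size_Zstar.
Qed.

Import GRing.Theory Num.Theory.
Local Open Scope ring_scope.

Theorem mainTheorem2 (n l d y : nat) :
  (l < n)%N -> (d %| n)%N -> y \in Zmd n d ->
  (count (fun x => has (fun b => x * b == y %[mod n]) (iota 0 l.+1)) (Zstar n))%:R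
  = (rel_totient (n %/ d) (l %/ d))%:R / (totient (n %/ d))%:R * (totient n)%:R :> rat.
Proof.
move=> ln dn yZ.
have [m0 [-> ->]] := main_nat ln dn yZ.
have t0 : (totient (n %/ d))%:R != 0 :> rat.
  by rewrite pnatr_eq0 -lt0n totient_gt0.
rewrite !natrM; field.
exact: t0.
Qed.
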